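(* Let $G$ be a connected finite simple undirected graph with vertex set $V_G$ (with $|V_G|\ge 2$) and maximum degree $d_G$. Let $W:V_G\to\mathbb{R}$ be a potential, let $\psi$ be the ground state of $H_{G,W}$ (chosen with $\psi(x)>0$ for all $x$), and let $\gamma$ be the gap between the smallest and second-smallest eigenvalues of $H_{G,W}$. If $\psi$ is single-peaked, then $$\gamma\ge\frac{1}{2(|W|+d_G)|V_G|^2},\qquad\text{where } |W|=\max_{x\in V_G}W(x)-\min_{x\in V_G}W(x).$$
   Context: For a finite simple undirected graph $G$ with vertex set $V_G$, let $\mathcal{H}_G$ be the complex Hilbert space with orthonormal basis $\{|x\rangle : x\in V_G\}$. The graph Laplacian is $L_G=\sum_{x} d_x |x\rangle\langle x| - \sum_{x\sim y}|x\rangle\langle y|$, where $d_x$ is the degree of $x$ and the second sum runs over ordered pairs of adjacent vertices. For a potential $W:V_G\to\mathbb{R}$, $H_{G,W}=L_G+\sum_{x} W(x)|x\rangle\langle x|$. By the Perron–Frobenius theorem, for connected $G$ the ground state of $H_{G,W}$ is nondegenerate and can be written $\sum_x\psi(x)|x\rangle$ with $\psi(x)>0$ for all $x$. The function $\psi$ has a local maximum at $x$ if $\psi(x)\ge\psi(y)$ for every neighbor $y$ of $x$. The ground state $\psi$ is called single-peaked if the set of local maxima of $\psi$ forms a connected set of vertices in $G$ (i.e. induces a connected subgraph). *)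

(* Defs.v *)
From HB Require Import structures.
From mathcomp Require Import all_boot all_order all_algebra.
Set Implicit Arguments. Unset Strict Implicit. Unset Printing Implicit Defensive.
Import Order.TTheory GRing.Theory Num.Theory.
Local Open Scope ring_scope.

Definition simple_graph (n : nat) (e : rel 'I_n) : Prop :=
  symmetric e /\ irreflexive e.

Definition graph_connected (n : nat) (e : rel 'I_n) : Prop :=
  forall x y, connect e x y.

Definition deg (n : nat) (e : rel 'I_n) (x : 'I_n) : nat := #|[set y | e x y]|.

Definition max_deg (n : nat) (e : rel 'I_n) : nat := (\max_(x : 'I_n) deg e x)%N.

Definition laplacian (R : nzRingType) (n : nat) (e : rel 'I_n) : 'M[R]_n :=
  \matrix_(i, j) ((if i == j then (deg e i)%:R else 0) - (if e i j then 1 else 0)).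

Definition hamiltonian (R : nzRingType) (n : nat) (e : rel 'I_n) (W : 'I_n -> R)
  : 'M[R]_n := laplacian R e + diag_mx (\row_i W i).

(* |W| = max_x W(x) - min_x W(x), written as max_{x,y} (W x - W y)
   (the default value 0 is harmless since W x - W x = 0). *)
Definition Wspread (R : realDomainType) (n : nat) (W : 'I_n -> R) : R :=
  \big[Num.max/0]_(x : 'I_n) \big[Num.max/0]_(y : 'I_n) (W x - W y).

Definition local_max (R : realDomainType) (n : nat) (e : rel 'I_n) (psi : 'I_n -> R)
  (x : 'I_n) : bool := [forall y, e x y ==> (psi y <= psi x)].

Definition single_peaked (R : realDomainType) (n : nat) (e : rel 'I_n)
  (psi : 'I_n -> R) : Prop :=
  forall x y, local_max e psi x -> local_max e psi y ->
    connect [rel a b | [&& e a b, local_max e psi a & local_max e psi b]] x y.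

(* Main.v *)
Require Import Defs.
From HB Require Import structures.
From mathcomp Require Import all_boot all_order all_algebra.
From mathcomp Require Import reals.
From mathcomp Require Import ring lra.
Import Order.TTheory GRing.Theory Num.Theory.
Local Open Scope ring_scope.
Set Implicit Arguments. Unset Strict Implicit.

Section S.
Variable (R : realType) (n : nat) (e : rel 'I_n) (W : 'I_n -> R).
Hypothesis esym : symmetric e.

Definition D (y : 'I_n) : R := (deg e y)%:R + W y.

Lemma mulH (v : 'rV[R]_n) y :
  (v *m hamiltonian e W) 0 y = v 0 y * D y - \sum_x (if e x y then v 0 x else 0).
Proof.
rewrite !mxE.
under eq_bigr => x _ do rewrite !mxE mulrDr mulrBr.
rewrite big_split sumrB /=.
have h1 : \sum_i v 0 i * (if i == y then (deg e i)%:R else 0) = v 0 y * (deg e y)%:R.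
  rewrite (bigD1 y) //= eqxx big1 ?addr0 // => i /negbTE ->; by rewrite mulr0.
have h2 : \sum_i v 0 i * (W i *+ (i == y)) = v 0 y * W y.
  rewrite (bigD1 y) //= eqxx big1 ?addr0 // => i /negbTE ->; by rewrite mulr0n mulr0.
rewrite h1 h2 /D mulrDr.
have h3 : \sum_i v 0 i * (if e i y then 1 else 0) = \sum_x (if e x y then v 0 x else 0).
  by apply: eq_bigr => i _; case: (e i y); rewrite ?mulr1 ?mulr0.
rewrite h3; ring.
Qed.
End S.

Section S.
Variable (R : realType) (n : nat) (e : rel 'I_n) (W : 'I_n -> R).
Hypothesis esym : symmetric e.

Lemma eigE (v : 'rV[R]_n) mu : v *m hamiltonian e W = mu *: v ->
  forall y, \sum_x (if e y x then v 0 x else 0) = (D e W y - mu) * v 0 y.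
Proof.
move=> h y; have := congr1 (fun M : 'M[R]_(1,n) => M 0 y) h; rewrite mulH mxE => h'.
have -> : \sum_x (if e y x then v 0 x else 0) = \sum_x (if e x y then v 0 x else 0).
  by apply: eq_bigr => x _; rewrite esym.
rewrite mulrBl; lra.
Qed.

Lemma ortho_eig (u v : 'rV[R]_n) lam mu : u *m hamiltonian e W = lam *: u ->
  v *m hamiltonian e W = mu *: v -> mu != lam ->
  \sum_x v 0 x * u 0 x = 0.
Proof.
move=> hu hv hne.
have A : \sum_y (\sum_x (if e y x then v 0 x else 0)) * u 0 y =
         \sum_y (\sum_x (if e y x then u 0 x else 0)) * v 0 y.
  under eq_bigr => y _ do rewrite mulr_suml.
  rewrite exchange_big /=; apply: eq_bigr => y _; rewrite mulr_suml.
  by apply: eq_bigr => x _; rewrite (esym x y); case: (e y x); rewrite ?mul0r // mulrC.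
move: A; under eq_bigr => y _ do rewrite (eigE hv).
under [in X in _ = X -> _]eq_bigr => y _ do rewrite (eigE hu).
move=> A.
have B : (lam - mu) * \sum_x v 0 x * u 0 x =
   \sum_y ((D e W y - mu) * v 0 y * u 0 y - (D e W y - lam) * u 0 y * v 0 y).
  by rewrite mulr_sumr; apply: eq_bigr => y _; ring.
rewrite sumrB A subrr in B.
move/eqP: B; rewrite mulf_eq0 subr_eq0 eq_sym (negbTE hne) /=; by move/eqP.
Qed.

Lemma energy (u v : 'rV[R]_n) lam mu : (forall x, 0 < u 0 x) ->
  u *m hamiltonian e W = lam *: u -> v *m hamiltonian e W = mu *: v ->
  \sum_a \sum_b (if e a b then u 0 a * u 0 b * (v 0 a / u 0 a - v 0 b / u 0 b) ^+ 2 else 0)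
  = 2 * (mu - lam) * \sum_x v 0 x ^+ 2.
Proof.
move=> upos hu hv.
have E1 : forall a b, (if e a b then u 0 a * u 0 b * (v 0 a / u 0 a - v 0 b / u 0 b) ^+ 2 else 0)
   = (v 0 a ^+ 2 / u 0 a) * (if e a b then u 0 b else 0)
     + (v 0 b ^+ 2 / u 0 b) * (if e b a then u 0 a else 0)
     - 2 * (v 0 a * (if e a b then v 0 b else 0)).
  move=> a b; rewrite (esym b a); case: (e a b); last by rewrite !mulr0; ring.
  have := upos a; have := upos b; rewrite !lt0r => /andP[ha _] /andP[hb _].
  by field; rewrite ha hb.
under eq_bigr => a _ do under eq_bigr => b _ do rewrite E1.
have S1 : \sum_a \sum_b (v 0 a ^+ 2 / u 0 a) * (if e a b then u 0 b else 0)
   = \sum_a v 0 a ^+ 2 * (D e W a - lam).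
  apply: eq_bigr => a _; rewrite -mulr_sumr (eigE hu).
  have := upos a; rewrite lt0r => /andP[ha _]; by field.
have S2 : \sum_a \sum_b (v 0 b ^+ 2 / u 0 b) * (if e b a then u 0 a else 0)
   = \sum_a v 0 a ^+ 2 * (D e W a - lam).
  by rewrite exchange_big /= S1.
have S3 : \sum_a \sum_b 2 * (v 0 a * (if e a b then v 0 b else 0))
   = 2 * \sum_a v 0 a ^+ 2 * (D e W a - mu).
  rewrite mulr_sumr; apply: eq_bigr => a _; rewrite -mulr_sumr -mulr_sumr (eigE hv).
  ring.
have T : \sum_a \sum_b ((v 0 a ^+ 2 / u 0 a) * (if e a b then u 0 b else 0)
     + (v 0 b ^+ 2 / u 0 b) * (if e b a then u 0 a else 0)
     - 2 * (v 0 a * (if e a b then v 0 b else 0)))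
   = \sum_a \sum_b (v 0 a ^+ 2 / u 0 a) * (if e a b then u 0 b else 0)
     + \sum_a \sum_b (v 0 b ^+ 2 / u 0 b) * (if e b a then u 0 a else 0)
     - \sum_a \sum_b 2 * (v 0 a * (if e a b then v 0 b else 0)).
  rewrite -big_split -sumrB /=; apply: eq_bigr => a _.
  by rewrite -big_split -sumrB.
rewrite T S1 S2 S3 !mulr_sumr -big_split -sumrB /=; apply: eq_bigr => a _; ring.
Qed.

End S.

Section G.
Variable (R : realType) (n : nat) (e : rel 'I_n) (P : 'I_n -> R).
Hypothesis esym : symmetric e.

Definition em (m : R) : rel 'I_n := [rel a b | [&& e a b, m <= P a & m <= P b]].

Lemma em_sym m : symmetric (em m).
Proof. by move=> a b; rewrite /em /= esym; case: (e b a); rewrite //= andbC. Qed.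

Lemma ascend m x : m <= P x ->
  exists z, [/\ local_max e P z, connect (em m) x z & P x <= P z].
Proof.
move=> hx.
case: (@arg_maxP _ _ _ x (fun z => connect (em m) x z) P (connect0 _ _)) => z Hz Hmax.
exists z; have hxz : P x <= P z by apply: Hmax; exact: connect0.
split => //; apply/forallP => y; apply/implyP => ezy.
case: (lerP (P y) (P z)) => // hlt.
have : connect (em m) x y.
  apply: connect_trans Hz (connect1 _); rewrite /em /= ezy /=.
  apply/andP; split; [exact: le_trans hxz | exact: le_trans (le_trans hxz (ltW hlt))].
by move/Hmax => /= h; move: hlt; rewrite ltNge h.
Qed.

Definition lmrel : rel 'I_n :=
  [rel a b | [&& e a b, local_max e P a & local_max e P b]].

Lemma path_lm m a p : path lmrel a p -> m <= P a ->
  path (em m) a p /\ P (last a p) = P a.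
Proof.
elim: p a => [|b p IH] a //= /andP[/and3P[eab la lb] hp] ha.
have eq : P b = P a.
  apply/eqP; rewrite eq_le; apply/andP; split.
    by move/forallP: la => /(_ b); rewrite eab.
  by move/forallP: lb => /(_ a); rewrite esym eab.
have hb : m <= P b by rewrite eq.
have [h1 h2] := IH b hp hb.
by rewrite /em /= eab ha hb h1 h2 eq.
Qed.

Lemma conn_min (sp : single_peaked e P) x y :
  connect (em (Num.min (P x) (P y))) x y.
Proof.
set m := Num.min (P x) (P y).
have hx : m <= P x by rewrite ge_min lexx.
have hy : m <= P y by rewrite ge_min lexx orbT.
have [z1 [l1 c1 h1]] := ascend hx.
have [z2 [l2 c2 h2]] := ascend hy.
have := sp z1 z2 l1 l2 => /connectP[p hp ez2].
have [hp' _] := path_lm hp (le_trans hx h1).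
have c12 : connect (em m) z1 z2 by apply/connectP; exists p.
apply: connect_trans c1 _; apply: connect_trans c12 _.
by rewrite (sym_connect_sym (@em_sym m)).
Qed.

Fixpoint stepsum (g : 'I_n -> 'I_n -> R) x p :=
  if p is a :: p' then g x a + stepsum g a p' else 0.

Variable f : 'I_n -> R.
Hypothesis Ppos : forall x, 0 < P x.
Definition gg a b := P a * P b * (f a - f b) ^+ 2.

Lemma gg_ge0 a b : 0 <= gg a b.
Proof. by rewrite /gg mulr_ge0 ?sqr_ge0 // mulr_ge0 // ltW. Qed.

Lemma stepsum_ge0 x p : 0 <= stepsum gg x p.
Proof. elim: p x => [|a p IH] x //=; by rewrite addr_ge0 ?gg_ge0. Qed.

Lemma path_bound m x p : 0 <= m -> path (em m) x p ->
  m ^+ 2 * (f x - f (last x p)) ^+ 2 <= (size p)%:R * stepsum gg x p.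
Proof.
move=> hm; elim: p x => [|a p IH] x /=; first by rewrite subrr expr0n /= mulr0 mul0r.
case/andP => /and3P[_ hxm ham] hp.
have := IH a hp; have := stepsum_ge0 a p.
set S := stepsum gg a p; set k := (size p)%:R; set U := f x - f a; set V := f a - f (last a p).
move=> S0 hV.
have hk : 0 <= k by rewrite /k ler0n.
have mm : m ^+ 2 <= P x * P a.
  by rewrite expr2; apply: ler_pM.
have hg : m ^+ 2 * U ^+ 2 <= gg x a.
  by rewrite /gg -/U; apply: ler_wpM2r; rewrite ?sqr_ge0.
have -> : f x - f (last a p) = U + V by rewrite /U /V; ring.
rewrite -natr1 -/k.
suff : m ^+ 2 * (U + V) ^+ 2 <= (k + 1) * (m ^+ 2 * U ^+ 2 + S).
  move=> h; apply: le_trans h _; apply: ler_wpM2l; first lra.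
  by rewrite lerD2r.
set a2 := m ^+ 2 * U ^+ 2. set b2 := m ^+ 2 * V ^+ 2.
have ha2 : 0 <= a2 by rewrite mulr_ge0 ?sqr_ge0.
have hab : (m ^+ 2 * (U + V) ^+ 2) = a2 + b2 + 2 * ((m * U) * (m * V)).
  rewrite /a2 /b2; ring.
have hb2 : b2 <= k * S by [].
rewrite hab.
set X := m * U. set Y := m * V.
have eX : a2 = X ^+ 2 by rewrite /a2 /X; ring.
have eY : b2 = Y ^+ 2 by rewrite /b2 /Y; ring.
rewrite eX eY in hb2 *.
have : 0 <= (k * X - Y) ^+ 2 by rewrite sqr_ge0.
case: (ltrgt0P k) => hk'; [ | lra | ].
- move=> hsq; nra.
- rewrite hk' in hb2 *; move=> _.
  have : Y ^+ 2 <= 0 by rewrite mul0r in hb2.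
  have := sqr_ge0 Y => h1 h2.
  have Y0 : Y = 0 by apply/eqP; rewrite -sqrf_eq0 eq_le h2 h1.
  rewrite Y0; lra.
Qed.

Lemma stepsum_le x p : uniq (x :: p) -> path e x p ->
  stepsum gg x p <= \sum_(c <- x :: p) \sum_b (if e c b then gg c b else 0).
Proof.
elim: p x => [|a p IH] x /=.
  move=> _ _; rewrite big_cons big_nil addr0 sumr_ge0 // => b _.
  by case: ifP => // _; exact: gg_ge0.
case/andP => /norP[_ hx] hu /andP[exa hp].
rewrite big_cons; apply: lerD; last exact: IH.
rewrite (bigD1 a) //= exa lerDl sumr_ge0 // => b _.
by case: ifP => // _; exact: gg_ge0.
Qed.

Lemma sum_seq_le (F : 'I_n -> R) (s : seq 'I_n) : uniq s -> (forall c, 0 <= F c) ->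
  \sum_(c <- s) F c <= \sum_c F c.
Proof.
move=> us F0; rewrite big_uniq // [X in _ <= X](bigID (fun c => c \in s)) /=.
by rewrite lerDl sumr_ge0.
Qed.

End G.

Section M.
Variable (R : realType) (n : nat) (e : rel 'I_n) (W : 'I_n -> R) (psi : 'rV[R]_n) (lam : R).
Hypothesis esym : symmetric e.
Hypothesis ppos : forall x, 0 < psi 0 x.
Hypothesis heig : psi *m hamiltonian e W = lam *: psi.
Hypothesis sp : single_peaked e (fun x => psi 0 x).

Let P x := psi 0 x.

Lemma pair_bound (f : 'I_n -> R) x y :
  (P x * P y) ^+ 2 * (f x - f y) ^+ 2 <=
  (P x ^+ 2 + P y ^+ 2) * (n%:R * \sum_a \sum_b (if e a b then gg P f a b else 0)).
Proof.
set m := Num.min (P x) (P y).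
have m0 : 0 < m by rewrite lt_min !ppos.
have hmm : (P x * P y) ^+ 2 <= (P x ^+ 2 + P y ^+ 2) * m ^+ 2.
  have hx := ppos x; have hy := ppos y; rewrite /m /P.
  case: (leP (psi 0 x) (psi 0 y)) => h.
    rewrite exprMn mulrC ler_wpM2r ?sqr_ge0 // lerDr sqr_ge0 //.
  rewrite exprMn ler_wpM2r ?sqr_ge0 // lerDl sqr_ge0 //.
have := @conn_min R n e P esym sp x y; rewrite -/m => /connectP[p hp ey].
move: hmm; rewrite ey; case: (shortenP hp) => p' hp' up' _ hmm.
have hb := path_bound f ppos (ltW m0) hp'.
have hs : stepsum (gg P f) x p' <= \sum_a \sum_b (if e a b then gg P f a b else 0).
  apply: le_trans (@stepsum_le R n e P f ppos x p' up' _) _.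

  - by apply: sub_path hp' => a b /and3P[].
  apply: sum_seq_le => // c; apply: sumr_ge0 => b _; case: ifP => // _.
  by apply: gg_ge0; exact: ppos.
have hsz : ((size p')%:R : R) <= n%:R.
  rewrite ler_nat; have h := max_card (mem (x :: p')); move/card_uniqP: (up') => hu.
  by rewrite hu card_ord /= in h; exact: ltnW.
have E0 : 0 <= \sum_a \sum_b (if e a b then gg P f a b else 0).
  apply: sumr_ge0 => a _; apply: sumr_ge0 => b _; case: ifP => // _.
  by apply: gg_ge0; exact: ppos.
have S0 := stepsum_ge0 f ppos x p'.
set E := \sum_a _ in hs E0 *.
set S := stepsum _ _ _ in hb hs S0.
set F := (f x - f (last x p')) ^+ 2 in hb *.
have F0 : 0 <= F by rewrite sqr_ge0.
set k := ((size p')%:R : R) in hb hsz.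
have k0 : 0 <= k by rewrite ler0n.
apply: le_trans (_ : (P x ^+ 2 + P (last x p') ^+ 2) * m ^+ 2 * F <= _).
  by apply: ler_wpM2r.
rewrite -mulrA ler_wpM2l ?addr_ge0 ?sqr_ge0 //.
apply: le_trans hb _; apply: le_trans (_ : k * E <= _).
  by rewrite ler_wpM2l.
by rewrite ler_wpM2r.
Qed.

Lemma sum_prod (F G : 'I_n -> R) :
  \sum_x \sum_y F x * G y = (\sum_x F x) * (\sum_y G y).
Proof. by rewrite mulr_suml; apply: eq_bigr => x _; rewrite mulr_sumr. Qed.

Lemma sum_const_n (c : R) : \sum_(x < n) c = n%:R * c.
Proof. by rewrite sumr_const card_ord mulr_natl. Qed.

Hypothesis n0 : (0 < n)%N.

Lemma core (phi : 'rV[R]_n) mu : phi *m hamiltonian e W = mu *: phi ->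
  \sum_x phi 0 x * psi 0 x = 0 ->
  \sum_x phi 0 x ^+ 2 <= 2 * n%:R ^+ 2 * (mu - lam) * \sum_x phi 0 x ^+ 2.
Proof.
move=> hphi horth.
set f := fun x => phi 0 x / psi 0 x.
set E := \sum_a \sum_b (if e a b then gg P f a b else 0).
have hE : E = 2 * (mu - lam) * \sum_x phi 0 x ^+ 2 by rewrite /E /gg /f /P; exact: (energy esym ppos heig hphi).
set Q := \sum_x phi 0 x ^+ 2.
set S := \sum_x psi 0 x ^+ 2.
have key : forall x y, (phi 0 x * psi 0 y - phi 0 y * psi 0 x) ^+ 2
    <= (psi 0 x ^+ 2 + psi 0 y ^+ 2) * (n%:R * E).
  move=> x y; have hx := ppos x; have hy := ppos y.
  have -> : (phi 0 x * psi 0 y - phi 0 y * psi 0 x) ^+ 2 = (P x * P y) ^+ 2 * (f x - f y) ^+ 2.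
    by rewrite /f /P /=; field; rewrite !gt_eqF.
  exact: pair_bound.
have Hsum : \sum_x \sum_y (phi 0 x * psi 0 y - phi 0 y * psi 0 x) ^+ 2 = 2 * Q * S.
  have T : \sum_x \sum_y (phi 0 x * psi 0 y - phi 0 y * psi 0 x) ^+ 2 =
     \sum_x \sum_y (phi 0 x ^+ 2 * psi 0 y ^+ 2) + \sum_x \sum_y (psi 0 x ^+ 2 * phi 0 y ^+ 2)
     - 2 * (\sum_x \sum_y ((phi 0 x * psi 0 x) * (phi 0 y * psi 0 y))).
    rewrite mulr_sumr -big_split -sumrB /=; apply: eq_bigr => x _.
    rewrite mulr_sumr -big_split -sumrB /=; apply: eq_bigr => y _; ring.
  by rewrite T !sum_prod horth mulr0 mulr0 subr0 /Q /S; ring.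
have Hb : \sum_x \sum_y (phi 0 x * psi 0 y - phi 0 y * psi 0 x) ^+ 2
    <= 2 * (n%:R * (n%:R * E)) * S.
  apply: le_trans (_ : \sum_x \sum_y (psi 0 x ^+ 2 + psi 0 y ^+ 2) * (n%:R * E) <= _).
    by apply: ler_sum => x _; apply: ler_sum => y _; exact: key.
  have T : \sum_x \sum_y (psi 0 x ^+ 2 + psi 0 y ^+ 2) * (n%:R * E) =
     \sum_(x < n) \sum_(y < n) (psi 0 x ^+ 2 * (n%:R * E)) + \sum_(x < n) \sum_(y < n) ((n%:R * E) * psi 0 y ^+ 2).
    rewrite -big_split /=; apply: eq_bigr => x _.
    rewrite -big_split /=; apply: eq_bigr => y _; ring.
  rewrite T !sum_prod !sum_const_n /S; rewrite le_eqVlt; apply/orP; left; apply/eqP; ring.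
have x0 : 'I_n := Ordinal n0.
have S0 : 0 < S.
  apply: lt_le_trans (_ : 0 < psi 0 x0 ^+ 2) _; first by rewrite exprn_gt0.
  by rewrite /S (bigD1 x0) //= lerDl sumr_ge0 // => i _; rewrite sqr_ge0.
have : Q * S <= (n%:R ^+ 2 * E) * S.
  move: Hsum Hb => ->; rewrite expr2; lra.
rewrite ler_pM2r // hE => h; apply: le_trans h _; rewrite le_eqVlt; apply/orP; left; apply/eqP; rewrite -/Q; ring.
Qed.

End M.

Lemma sq_pos (R : realType) (n : nat) (v : 'rV[R]_n) : v != 0 -> 0 < \sum_x v 0 x ^+ 2.
Proof.
move=> vnz; rewrite lt_def sumr_ge0 ?andbT; last by move=> i _; rewrite sqr_ge0.
apply/negP => /eqP h; move/negP: vnz; apply; apply/eqP/rowP => x.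
rewrite !mxE; apply/eqP; rewrite -sqrf_eq0; apply/eqP.
by apply: (psumr_eq0P _ h) => // i _; rewrite sqr_ge0.
Qed.

Unset Implicit Arguments.
Theorem proposition4 (R : realType) (n : nat) (e : rel 'I_n)
  (W : 'I_n -> R) (psi : 'rV[R]_n) (lam1 : R) :
  (2 <= n)%N ->
  simple_graph e ->
  graph_connected e ->
  (forall x, 0 < psi 0 x) ->
  psi *m hamiltonian e W = lam1 *: psi ->
  (forall mu, eigenvalue (hamiltonian e W) mu -> lam1 <= mu) ->
  single_peaked e (fun x => psi 0 x) ->
  \rank (eigenspace (hamiltonian e W) lam1) = 1%N /\
  (forall mu, eigenvalue (hamiltonian e W) mu -> mu != lam1 ->
     (2 * (Wspread W + (max_deg e)%:R) * (n%:R) ^+ 2)^-1 <= mu - lam1).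
Proof.
move=> n2 [esym eirr] conn ppos heig hmin sp.
have n0 : (0 < n)%N by apply: leq_trans n2.
have psi_nz : psi != 0.
  apply/negP => /eqP h; have := ppos (Ordinal n0); by rewrite h mxE ltxx.
have S0 := sq_pos psi_nz.
split.
  have hsub1 : (psi <= eigenspace (hamiltonian e W) lam1)%MS by apply/eigenspaceP.
  have hsub2 : (eigenspace (hamiltonian e W) lam1 <= psi)%MS.
    apply/row_subP => i; set v := row i _.
    have hv : v *m hamiltonian e W = lam1 *: v by apply/eigenspaceP; exact: row_sub.
    clearbody v.
    set c := (\sum_x v 0 x * psi 0 x) / (\sum_x psi 0 x ^+ 2).
    set w := v - c *: psi.
    have hw : w *m hamiltonian e W = lam1 *: w.
      by rewrite /w mulmxBl hv -scalemxAl heig !scalerA scalerBr scalerA mulrC.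
    have ho : \sum_x w 0 x * psi 0 x = 0.
      rewrite /w; under eq_bigr => x _ do rewrite !mxE mulrBl -mulrA -expr2.
      rewrite sumrB -mulr_sumr /c mulfVK ?subrr //; exact: lt0r_neq0.
    have := core esym ppos heig sp n0 hw ho; rewrite subrr mulr0 mul0r => hle.
    have w0 : w = 0.
      apply/eqP/negPn/negP => wnz; have hp := sq_pos wnz; move: (lt_le_trans hp hle); by rewrite ltxx.
    apply/sub_rVP; exists c; apply/eqP; rewrite -subr_eq0; apply/eqP; exact: w0.
  have r1 : \rank psi = 1%N by rewrite rank_rV psi_nz.
  apply/eqP; rewrite eqn_leq; apply/andP; split.
    by rewrite -r1 mxrankS.
  by rewrite -{1}r1 mxrankS.
move=> mu /eigenvalueP [v hv vnz] hne.
have ho := ortho_eig esym heig hv hne.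
have hle := core esym ppos heig sp n0 hv ho.
have Q0 := sq_pos vnz.
have h1 : 1 <= 2 * n%:R ^+ 2 * (mu - lam1).
  by rewrite -(ler_pM2r Q0) mul1r.
have Ws0 : 0 <= Wspread W.
  rewrite /Wspread; apply: (big_rec (fun x => 0 <= x)) => // i x _ hx.
  by rewrite le_max hx orbT.
have d1 : (1 <= max_deg e)%N.
  pose x0 : 'I_n := Ordinal n0. pose x1 : 'I_n := Ordinal n2.
  have hne01 : x0 != x1 by [].
  move: (conn x0 x1) => /connectP[[|a p]] /=.
    by move=> _ e01; move: hne01; rewrite e01 eqxx.
  move=> /andP[ea _] _.
  apply: leq_trans (leq_bigmax x0); rewrite /deg card_gt0; apply/set0Pn; exists a.
  by rewrite inE.
have dR : (1 : R) <= (max_deg e)%:R by rewrite ler1n.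
have nR : (0 : R) < n%:R by rewrite ltr0n.
set K := 2 * (Wspread W + (max_deg e)%:R) * n%:R ^+ 2.
have K0 : 0 < K by rewrite /K !mulr_gt0 ?exprn_gt0 //; lra.
rewrite -[K^-1]mulr1 ler_pdivrMl //.
have t0 : 0 <= mu - lam1.
  rewrite leNgt; apply/negP => hlt.
  have : 2 * n%:R ^+ 2 * (mu - lam1) < 0.
    by rewrite pmulr_rlt0 // mulr_gt0 // exprn_gt0.
  lra.
rewrite /K; nra.
Qed.
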